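(* For $0<A<1$ and $m>0$ let $K_m(A)=-e^{i\pi A}+e^{-i\pi A}e^{4\pi m i/3}-e^{i\pi A}e^{4\pi m i/3}$. Let $A_0,B_0\in(0,1)$ with $A_0+B_0=1$. Then there exist $\delta>0$ and differentiable real functions $\Theta_1(A,B),\Theta_2(A,B)$ defined on $\{|A-A_0|+|B-B_0|<\delta\}$ with $\Theta_1(A_0,B_0)=1$, $\Theta_2(A_0,B_0)=2$ and $$K_{\Theta_2(A,B)}(A)+K_{\Theta_1(A,B)}(B)=0$$ (so that $(A,B,\Theta_1(A,B),\Theta_2(A,B))$ belongs to the set $\mathcal K$ below). Moreover $$\lim_{\varepsilon\to0}\frac{\Theta_1(A_0,B_0-\varepsilon)-1}{\varepsilon}=\lim_{\varepsilon\to0}\frac{\Theta_2(A_0,B_0-\varepsilon)-2}{\varepsilon}=-\frac38\Big(1+\sqrt3\cot(\pi A_0)\Big).$$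
   Context: $\mathcal K=\{(A,B,n,m):0<A,B<1,\ n>0,\ m>0,\ \tfrac{2(n+m)}{3}>1,\ K_m(A)+K_n(B)=0\}$. *)

(* Defs.v *)
From Stdlib Require Import Reals.
Open Scope R_scope.

Definition C := (R * R)%type.
Definition Cadd (z w : C) : C := (fst z + fst w, snd z + snd w).
Definition Copp (z : C) : C := (- fst z, - snd z).
Definition Cmul (z w : C) : C :=
  (fst z * fst w - snd z * snd w, fst z * snd w + snd z * fst w).
Definition C0 : C := (0, 0).
Definition Cexpi (t : R) : C := (cos t, sin t).

Definition K (m A : R) : C :=
  Cadd (Cadd (Copp (Cexpi (PI * A)))
             (Cmul (Cexpi (- (PI * A))) (Cexpi (4 * PI * m / 3))))
       (Copp (Cmul (Cexpi (PI * A)) (Cexpi (4 * PI * m / 3)))).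

Definition inK (A B n m : R) : Prop :=
  0 < A < 1 /\ 0 < B < 1 /\ 0 < n /\ 0 < m /\ 2 * (n + m) / 3 > 1 /\
  Cadd (K m A) (K n B) = C0.

Definition differentiable2_at (f : R -> R -> R) (x y : R) : Prop :=
  exists a b : R, forall eps : R, 0 < eps -> exists d : R, 0 < d /\
    forall h k : R, Rabs h + Rabs k < d ->
      Rabs (f (x + h) (y + k) - f x y - a * h - b * k) <= eps * (Rabs h + Rabs k).

Definition lim0 (g : R -> R) (L : R) : Prop :=
  forall eps : R, 0 < eps -> exists d : R, 0 < d /\
    forall e : R, 0 < Rabs e < d -> Rabs (g e - L) < eps.

(* Main.v *)
From Coquelicot Require Import Coquelicot.
From Stdlib Require Import Reals Lra.
Require Import Defs.
Open Scope R_scope.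

Definition D2 (f : R -> R -> R) (x y : R) := exists lx ly, differentiable_pt_lim f x y lx ly.

Lemma dpl_plus x y : differentiable_pt_lim (fun a b => a + b) x y 1 1.
Proof.
  intros eps. exists (mkposreal 1 Rlt_0_1). intros u v _ _.
  replace (u + v - (x + y) - (1 * (u - x) + 1 * (v - y))) with 0 by ring.
  rewrite Rabs_R0. apply Rmult_le_pos. destruct eps; simpl; lra.
  apply Rle_trans with (Rabs (u-x)). apply Rabs_pos. apply Rmax_l.
Qed.

Lemma dpl_mult x y : differentiable_pt_lim (fun a b => a * b) x y y x.
Proof.
  intros eps. exists eps. intros u v Hu Hv.
  replace (u * v - x * y - (y * (u - x) + x * (v - y))) with ((u-x)*(v-y)) by ring.
  rewrite Rabs_mult.
  destruct (Rle_dec (Rabs (u-x)) (Rabs (v-y))).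
  - rewrite Rmax_right by lra. apply Rmult_le_compat; try apply Rabs_pos; lra.
  - rewrite Rmax_left by lra. rewrite (Rmult_comm (Rabs (u-x))). apply Rmult_le_compat; try apply Rabs_pos; lra.
Qed.

Lemma D2_comp2 (h : R -> R -> R) f g x y :
  (forall a b, D2 h a b) -> D2 f x y -> D2 g x y -> D2 (fun u v => h (f u v) (g u v)) x y.
Proof.
  intros Hh [a [b Hf]] [c [d Hg]]. destruct (Hh (f x y) (g x y)) as [l1 [l2 H]].
  eexists; eexists. apply differentiable_pt_lim_comp; eauto.
Qed.

Lemma D2_plus f g x y : D2 f x y -> D2 g x y -> D2 (fun u v => f u v + g u v) x y.
Proof. apply (D2_comp2 (fun a b => a + b)). intros a b; do 2 eexists; apply dpl_plus. Qed.
Lemma D2_mult f g x y : D2 f x y -> D2 g x y -> D2 (fun u v => f u v * g u v) x y.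
Proof. apply (D2_comp2 (fun a b => a * b)). intros a b; do 2 eexists; apply dpl_mult. Qed.

Lemma D2_comp1 (h : R -> R) f x y : D2 f x y -> ex_derive h (f x y) -> D2 (fun u v => h (f u v)) x y.
Proof.
  intros [a [b Hf]] [l Hl]. apply is_derive_Reals in Hl.
  eexists; eexists.
  apply (differentiable_pt_lim_comp (fun p _ => h p) f f).
  apply differentiable_pt_lim_proj1_0. exact Hl. exact Hf. exact Hf.
Qed.

Lemma D2_fst x y : D2 (fun u v => u) x y.
Proof. do 2 eexists. apply (differentiable_pt_lim_proj1_0 (fun u => u)).
  apply is_derive_Reals. auto_derive; auto. Qed.

Lemma D2_const c x y : D2 (fun u v => c) x y.
Proof. do 2 eexists. apply (differentiable_pt_lim_proj1_0 (fun u => c)).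
  apply is_derive_Reals. auto_derive; auto. Qed.

Lemma D2_snd x y : D2 (fun u v => v) x y.
Proof. exists 0, 1. intros eps. exists (mkposreal 1 Rlt_0_1). intros u v _ _.
  replace (v - y - (0 * (u - x) + 1 * (v - y))) with 0 by ring.
  rewrite Rabs_R0. apply Rmult_le_pos. destruct eps; simpl; lra.
  apply Rle_trans with (Rabs (v-y)). apply Rabs_pos. apply Rmax_r.
Qed.

Lemma D2_opp f x y : D2 f x y -> D2 (fun u v => - f u v) x y.
Proof. intros H. apply (D2_comp1 Ropp); auto. auto_derive; auto. Qed.
Lemma D2_minus f g x y : D2 f x y -> D2 g x y -> D2 (fun u v => f u v - g u v) x y.
Proof. intros. apply D2_plus; auto. apply D2_opp; auto. Qed.
Lemma D2_inv f x y : D2 f x y -> f x y <> 0 -> D2 (fun u v => / f u v) x y.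
Proof. intros H H0. apply (D2_comp1 Rinv); auto. auto_derive; auto. Qed.
Lemma D2_div f g x y : D2 f x y -> D2 g x y -> g x y <> 0 -> D2 (fun u v => f u v / g u v) x y.
Proof. intros. apply D2_mult; auto. apply D2_inv; auto. Qed.
Lemma D2_pow f n x y : D2 f x y -> D2 (fun u v => f u v ^ n) x y.
Proof. intros H. apply (D2_comp1 (fun t => t ^ n)); auto. auto_derive; auto. Qed.
Lemma D2_sin f x y : D2 f x y -> D2 (fun u v => sin (f u v)) x y.
Proof. intros H. apply (D2_comp1 sin); auto. auto_derive; auto. Qed.
Lemma D2_cos f x y : D2 f x y -> D2 (fun u v => cos (f u v)) x y.
Proof. intros H. apply (D2_comp1 cos); auto. auto_derive; auto. Qed.
Lemma D2_sqrt f x y : D2 f x y -> 0 < f x y -> D2 (fun u v => sqrt (f u v)) x y.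
Proof. intros H H0. apply (D2_comp1 sqrt); auto. auto_derive; auto. Qed.
Lemma D2_atan f x y : D2 f x y -> D2 (fun u v => atan (f u v)) x y.
Proof. intros H. apply (D2_comp1 atan); auto. exists (/ (1 + f x y ^ 2)).
  apply is_derive_Reals. apply derivable_pt_lim_atan. Qed.
Lemma D2_acos f x y : D2 f x y -> -1 < f x y < 1 -> D2 (fun u v => acos (f u v)) x y.
Proof. intros H H0. apply (D2_comp1 acos); auto. apply ex_derive_Reals_1.
  apply derivable_pt_acos; auto. Qed.

Lemma D2_to_diff f x y : D2 f x y ->
  exists a b : R, forall eps : R, 0 < eps -> exists d : R, 0 < d /\
    forall h k : R, Rabs h + Rabs k < d ->
      Rabs (f (x + h) (y + k) - f x y - a * h - b * k) <= eps * (Rabs h + Rabs k).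
Proof.
  intros [a [b H]]. exists a, b. intros eps He.
  destruct (H (mkposreal eps He)) as [d Hd]. exists d. split. apply cond_pos.
  intros h k Hhk.
  assert (Hh: Rabs (x + h - x) < d) by (replace (x+h-x) with h by ring; pose proof (Rabs_pos k); lra).
  assert (Hk: Rabs (y + k - y) < d) by (replace (y+k-y) with k by ring; pose proof (Rabs_pos h); lra).
  specialize (Hd _ _ Hh Hk). simpl in Hd.
  replace (x+h-x) with h in Hd by ring. replace (y+k-y) with k in Hd by ring.
  replace (f (x + h) (y + k) - f x y - a * h - b * k) with (f (x + h) (y + k) - f x y - (a * h + b * k)) by ring.
  eapply Rle_trans. apply Hd. apply Rmult_le_compat_l. lra.
  apply Rmax_lub; pose proof (Rabs_pos h); pose proof (Rabs_pos k); lra.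
Qed.

Lemma D2_cont f x y : D2 f x y -> forall eps, 0 < eps -> exists d, 0 < d /\
  forall u v, Rabs (u - x) + Rabs (v - y) < d -> Rabs (f u v - f x y) < eps.
Proof.
  intros Hf eps He. destruct (D2_to_diff f x y Hf) as [a [b H]].
  destruct (H 1 Rlt_0_1) as [d [Hd H1]].
  set (M := Rabs a + Rabs b + 1).
  assert (HM : 0 < M) by (unfold M; pose proof (Rabs_pos a); pose proof (Rabs_pos b); lra).
  exists (Rmin d (eps / M)). split. apply Rmin_pos; auto. apply Rdiv_lt_0_compat; auto.
  intros u v Huv. specialize (H1 (u - x) (v - y)).
  replace (x + (u - x)) with u in H1 by ring. replace (y + (v - y)) with v in H1 by ring.
  assert (Hlt : Rabs (u - x) + Rabs (v - y) < d) by (pose proof (Rmin_l d (eps/M)); lra).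
  specialize (H1 Hlt).
  assert (Hs : Rabs (u - x) + Rabs (v - y) < eps / M) by (pose proof (Rmin_r d (eps/M)); lra).
  set (h := u - x) in *. set (k := v - y) in *.
  assert (E : f u v - f x y = (f u v - f x y - a * h - b * k) + (a * h + b * k)) by ring.
  rewrite E. eapply Rle_lt_trans. apply Rabs_triang.
  assert (T : Rabs (a * h + b * k) <= Rabs a * Rabs h + Rabs b * Rabs k)
    by (rewrite <- !Rabs_mult; apply Rabs_triang).
  assert (T2 : Rabs a * Rabs h + Rabs b * Rabs k <= (Rabs a + Rabs b) * (Rabs h + Rabs k)).
  { pose proof (Rabs_pos a); pose proof (Rabs_pos b); pose proof (Rabs_pos h); pose proof (Rabs_pos k). nra. }
  assert (T3 : M * (Rabs h + Rabs k) = 1 * (Rabs h + Rabs k) + (Rabs a + Rabs b) * (Rabs h + Rabs k)) by (unfold M; ring).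
  apply (Rmult_lt_compat_l M) in Hs; auto.
  replace (M * (eps / M)) with eps in Hs by (field; lra). lra.
Qed.

Definition fS A B := sin (PI*A) + sin (PI*B).
Definition fC A B := cos (PI*A) + cos (PI*B).
Definition fk A B := fC A B / fS A B.
Definition fr A B := fS A B * sqrt (1 + fk A B ^ 2) / 2.
Definition fp A B := (fr A B ^ 2 + sin (PI*A) ^ 2 - sin (PI*B) ^ 2) / (2 * fr A B * sin (PI*A)).
Definition fq A B := (fr A B ^ 2 + sin (PI*B) ^ 2 - sin (PI*A) ^ 2) / (2 * fr A B * sin (PI*B)).
Definition fphi A B := PI - atan (fk A B).
Definition Th1 A B := 3/(4*PI) * (fphi A B + acos (fq A B)).
Definition Th2 A B := 3/(4*PI) * (2*PI + fphi A B - acos (fp A B)).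

Lemma sinpos A : 0 < A < 1 -> 0 < sin (PI * A).
Proof. intros H. pose proof PI_RGT_0. apply sin_gt_0; nra. Qed.

Lemma Rk_pos A B : 0 < sqrt (1 + fk A B ^ 2).
Proof. apply sqrt_lt_R0. pose proof (pow2_ge_0 (fk A B)). lra. Qed.

Lemma fS_pos A B : 0 < A < 1 -> 0 < B < 1 -> 0 < fS A B.
Proof. intros. unfold fS. pose proof (sinpos A H); pose proof (sinpos B H0); lra. Qed.

Lemma fr_pos A B : 0 < A < 1 -> 0 < B < 1 -> 0 < fr A B.
Proof. intros. unfold fr. pose proof (fS_pos A B H H0). pose proof (Rk_pos A B). nra. Qed.

Lemma eqn A B : 0 < A < 1 -> 0 < B < 1 -> -1 <= fp A B <= 1 -> -1 <= fq A B <= 1 ->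
  Cadd (K (Th2 A B) A) (K (Th1 A B) B) = C0.
Proof.
  intros HA HB Hp Hq. pose proof PI_RGT_0.
  assert (E2: 4*PI*Th2 A B/3 = 2*PI + (fphi A B - acos (fp A B))) by (unfold Th2; field; lra).
  assert (E1: 4*PI*Th1 A B/3 = fphi A B + acos (fq A B)) by (unfold Th1; field; lra).
  pose proof (sinpos A HA) as sa0. pose proof (sinpos B HB) as sb0.
  pose proof (fS_pos A B HA HB) as S0. pose proof (fr_pos A B HA HB) as r0.
  pose proof (Rk_pos A B) as Rk0.
  assert (Hsq : sqrt (1 - fq A B ^ 2) = sin (PI*A) * sqrt (1 - fp A B ^ 2) / sin (PI*B)).
  { assert (X : sin (PI*B) ^2 * (1 - fq A B ^ 2) = sin (PI*A) ^2 * (1 - fp A B ^ 2)).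
    { unfold fp, fq. field. split; lra. }
    apply (Rmult_eq_reg_l (sin (PI*B))); [|lra].
    replace (sin (PI * B) * (sin (PI * A) * sqrt (1 - fp A B ^ 2) / sin (PI * B)))
      with (sin (PI * A) * sqrt (1 - fp A B ^ 2)) by (field; lra).
    rewrite <- (sqrt_pow2 (sin (PI*B))) at 1 by lra.
    rewrite <- (sqrt_pow2 (sin (PI*A))) at 1 by lra.
    rewrite <- !sqrt_mult_alt by (apply pow2_ge_0). rewrite X. reflexivity. }
  assert (Rsq2 : (fk A B)² = fk A B ^ 2) by (unfold Rsqr; ring).
  assert (Cphi : cos (fphi A B) = - / sqrt (1 + fk A B ^ 2)).
  { unfold fphi. rewrite cos_minus, cos_PI, sin_PI, cos_atan. rewrite Rsq2.
    field. lra. }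
  assert (Sphi : sin (fphi A B) = fk A B / sqrt (1 + fk A B ^ 2)).
  { unfold fphi. rewrite sin_minus, cos_PI, sin_PI, sin_atan. rewrite Rsq2.
    field. lra. }
  unfold K, Cadd, Copp, Cmul, Cexpi, C0; simpl. rewrite E1, E2.
  rewrite !cos_neg, !sin_neg, (cos_plus (2*PI)), (sin_plus (2*PI)), cos_2PI, sin_2PI.
  rewrite cos_minus, sin_minus, cos_plus, sin_plus.
  rewrite cos_acos, sin_acos, cos_acos, sin_acos by lra.
  unfold Rsqr. replace (fq A B * fq A B) with (fq A B ^ 2) by ring.
  replace (fp A B * fp A B) with (fp A B ^ 2) by ring.
  rewrite Hsq, Cphi, Sphi.
  set (X := sqrt (1 - fp A B ^ 2)).
  assert (Hr : fr A B = fS A B * sqrt (1 + fk A B ^ 2) / 2) by reflexivity.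
  unfold fp, fq. rewrite Hr. unfold fk. unfold fk in Rk0. set (Rk := sqrt _) in *.
  unfold fS, fC in *. clearbody X Rk. f_equal; field; repeat split; lra.
Qed.

Ltac d2step :=
  match goal with
  | |- D2 (fun u v => u) _ _ => apply D2_fst
  | |- D2 (fun u v => v) _ _ => apply D2_snd
  | |- D2 (fun u v => ?c) _ _ => apply D2_const
  | |- D2 (fun u v => @?f u v + @?g u v) _ _ => apply (D2_plus f g)
  | |- D2 (fun u v => @?f u v - @?g u v) _ _ => apply (D2_minus f g)
  | |- D2 (fun u v => @?f u v * @?g u v) _ _ => apply (D2_mult f g)
  | |- D2 (fun u v => @?f u v / @?g u v) _ _ => apply (D2_div f g)
  | |- D2 (fun u v => @?f u v ^ ?n) _ _ => apply (D2_pow f n)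
  | |- D2 (fun u v => sin (@?f u v)) _ _ => apply (D2_sin f)
  | |- D2 (fun u v => cos (@?f u v)) _ _ => apply (D2_cos f)
  | |- D2 (fun u v => sqrt (@?f u v)) _ _ => apply (D2_sqrt f)
  | |- D2 (fun u v => atan (@?f u v)) _ _ => apply (D2_atan f)
  | |- D2 (fun u v => acos (@?f u v)) _ _ => apply (D2_acos f)
  end; cbv beta.
Ltac d2 := repeat d2step.

Lemma D2_fS A B : D2 fS A B. Proof. unfold fS. d2. Qed.
Lemma D2_fC A B : D2 fC A B. Proof. unfold fC. d2. Qed.
Lemma D2_fk A B : 0 < A < 1 -> 0 < B < 1 -> D2 fk A B.
Proof. intros. unfold fk. apply (D2_div fC fS). apply D2_fC. apply D2_fS.
  pose proof (fS_pos A B H H0); lra. Qed.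
Lemma D2_fr A B : 0 < A < 1 -> 0 < B < 1 -> D2 fr A B.
Proof. intros. unfold fr.
  apply (D2_div (fun u v => fS u v * sqrt (1 + fk u v ^ 2))). 2: apply D2_const. 2: lra.
  apply (D2_mult fS). apply D2_fS.
  apply (D2_sqrt (fun u v => 1 + fk u v ^ 2)). apply (D2_plus (fun _ _ => 1)). apply D2_const.
  apply (D2_pow fk). apply D2_fk; auto. pose proof (pow2_ge_0 (fk A B)); lra. Qed.
Lemma D2_fp A B : 0 < A < 1 -> 0 < B < 1 -> D2 fp A B.
Proof. intros. unfold fp.
  pose proof (fr_pos A B H H0). pose proof (sinpos A H).
  apply (D2_div (fun u v => fr u v ^ 2 + sin (PI * u) ^ 2 - sin (PI * v) ^ 2)
    (fun u v => 2 * fr u v * sin (PI * u))).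
  - apply (D2_minus (fun u v => fr u v ^ 2 + sin (PI * u) ^ 2)). apply (D2_plus (fun u v => fr u v ^ 2)).
    apply (D2_pow fr). apply D2_fr; auto. d2. d2.
  - apply (D2_mult (fun u v => 2 * fr u v)). apply (D2_mult (fun _ _ => 2)). apply D2_const. apply D2_fr; auto. d2.
  - apply Rgt_not_eq. apply Rmult_gt_0_compat; lra.
Qed.
Lemma D2_fq A B : 0 < A < 1 -> 0 < B < 1 -> D2 fq A B.
Proof. intros. unfold fq.
  pose proof (fr_pos A B H H0). pose proof (sinpos B H0).
  apply (D2_div (fun u v => fr u v ^ 2 + sin (PI * v) ^ 2 - sin (PI * u) ^ 2)
    (fun u v => 2 * fr u v * sin (PI * v))).
  - apply (D2_minus (fun u v => fr u v ^ 2 + sin (PI * v) ^ 2)). apply (D2_plus (fun u v => fr u v ^ 2)).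
    apply (D2_pow fr). apply D2_fr; auto. d2. d2.
  - apply (D2_mult (fun u v => 2 * fr u v)). apply (D2_mult (fun _ _ => 2)). apply D2_const. apply D2_fr; auto. d2.
  - apply Rgt_not_eq. apply Rmult_gt_0_compat; lra.
Qed.
Lemma D2_Th1 A B : 0 < A < 1 -> 0 < B < 1 -> -1 < fq A B < 1 -> D2 Th1 A B.
Proof. intros. unfold Th1, fphi.
  apply (D2_mult (fun _ _ => 3 / (4 * PI))). apply D2_const.
  apply (D2_plus (fun u v => PI - atan (fk u v))). apply (D2_minus (fun _ _ => PI)). apply D2_const.
  apply (D2_atan fk). apply D2_fk; auto. apply (D2_acos fq). apply D2_fq; auto. auto. Qed.
Lemma D2_Th2 A B : 0 < A < 1 -> 0 < B < 1 -> -1 < fp A B < 1 -> D2 Th2 A B.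
Proof. intros. unfold Th2, fphi.
  apply (D2_mult (fun _ _ => 3 / (4 * PI))). apply D2_const.
  apply (D2_minus (fun u v => 2 * PI + (PI - atan (fk u v)))). 
  apply (D2_plus (fun _ _ => 2 * PI)). apply D2_const.
  apply (D2_minus (fun _ _ => PI)). apply D2_const.
  apply (D2_atan fk). apply D2_fk; auto. apply (D2_acos fp). apply D2_fp; auto. auto. Qed.

Lemma dq A0 B0 : 0 < A0 < 1 -> A0 + B0 = 1 ->
  is_derive (fun y => fq A0 y) B0 (- (3 * PI * cos (PI * A0)) / (4 * sin (PI * A0))).
Proof.
  intros HA HAB. assert (HB : B0 = 1 - A0) by lra. subst B0.
  assert (Hs : sin (PI * (1 - A0)) = sin (PI * A0)).
  { replace (PI * (1 - A0)) with (PI - PI * A0) by ring. apply sin_PI_x. }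
  assert (Hc : cos (PI * (1 - A0)) = - cos (PI * A0)).
  { replace (PI * (1 - A0)) with (PI - PI * A0) by ring. apply Rtrigo_facts.cos_pi_minus. }
  pose proof (sinpos A0 HA) as s0.
  unfold fq, fr, fk, fS, fC. auto_derive.
  all: rewrite ?Hs, ?Hc.
  all: replace (cos (PI * A0) + - cos (PI * A0)) with 0 by ring.
  all: replace (1 + 0 * / (sin (PI * A0) + sin (PI * A0)) * (0 * / (sin (PI * A0) + sin (PI * A0)) * 1)) with 1 by (field; lra).
  all: rewrite ?sqrt_1.
  - repeat split; try lra. apply Rgt_not_eq.
    replace (2 * ((sin (PI * A0) + sin (PI * A0)) * 1 * / 2) * sin (PI * A0)) with (2 * (sin (PI*A0) * sin (PI*A0))) by field.
    pose proof (Rmult_lt_0_compat _ _ s0 s0). lra.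
  - field. split; apply Rgt_not_eq; lra.
Qed.

Lemma dp A0 B0 : 0 < A0 < 1 -> A0 + B0 = 1 ->
  is_derive (fun y => fp A0 y) B0 ((3 * PI * cos (PI * A0)) / (4 * sin (PI * A0))).
Proof.
  intros HA HAB. assert (HB : B0 = 1 - A0) by lra. subst B0.
  assert (Hs : sin (PI * (1 - A0)) = sin (PI * A0)).
  { replace (PI * (1 - A0)) with (PI - PI * A0) by ring. apply sin_PI_x. }
  assert (Hc : cos (PI * (1 - A0)) = - cos (PI * A0)).
  { replace (PI * (1 - A0)) with (PI - PI * A0) by ring. apply Rtrigo_facts.cos_pi_minus. }
  pose proof (sinpos A0 HA) as s0.
  unfold fp, fr, fk, fS, fC. auto_derive.
  all: rewrite ?Hs, ?Hc.
  all: replace (cos (PI * A0) + - cos (PI * A0)) with 0 by ring.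
  all: replace (1 + 0 * / (sin (PI * A0) + sin (PI * A0)) * (0 * / (sin (PI * A0) + sin (PI * A0)) * 1)) with 1 by (field; lra).
  all: rewrite ?sqrt_1.
  - repeat split; try lra. apply Rgt_not_eq.
    replace (2 * ((sin (PI * A0) + sin (PI * A0)) * 1 * / 2) * sin (PI * A0)) with (2 * (sin (PI*A0) * sin (PI*A0))) by field.
    pose proof (Rmult_lt_0_compat _ _ s0 s0). lra.
  - field. split; apply Rgt_not_eq; lra.
Qed.

Lemma dphi A0 B0 : 0 < A0 < 1 -> A0 + B0 = 1 ->
  is_derive (fun y => fphi A0 y) B0 (PI / 2).
Proof.
  intros HA HAB. assert (HB : B0 = 1 - A0) by lra. subst B0.
  assert (Hs : sin (PI * (1 - A0)) = sin (PI * A0)).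
  { replace (PI * (1 - A0)) with (PI - PI * A0) by ring. apply sin_PI_x. }
  assert (Hc : cos (PI * (1 - A0)) = - cos (PI * A0)).
  { replace (PI * (1 - A0)) with (PI - PI * A0) by ring. apply Rtrigo_facts.cos_pi_minus. }
  pose proof (sinpos A0 HA) as s0.
  unfold fphi, fk, fS, fC.
  auto_derive.
  - rewrite Hs. apply Rgt_not_eq. lra.
  - rewrite Hs, Hc. replace (cos (PI * A0) + - cos (PI * A0)) with 0 by ring.
    field. repeat split; apply Rgt_not_eq; lra.
Qed.

Lemma base A0 B0 : 0 < A0 < 1 -> A0 + B0 = 1 ->
  fk A0 B0 = 0 /\ fp A0 B0 = 1/2 /\ fq A0 B0 = 1/2 /\ fphi A0 B0 = PI.
Proof.
  intros HA HAB. assert (HB : B0 = 1 - A0) by lra. subst B0.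
  assert (Hs : sin (PI * (1 - A0)) = sin (PI * A0)).
  { replace (PI * (1 - A0)) with (PI - PI * A0) by ring. apply sin_PI_x. }
  assert (Hc : cos (PI * (1 - A0)) = - cos (PI * A0)).
  { replace (PI * (1 - A0)) with (PI - PI * A0) by ring. apply Rtrigo_facts.cos_pi_minus. }
  pose proof (sinpos A0 HA) as s0.
  assert (Hk : fk A0 (1 - A0) = 0).
  { unfold fk, fC, fS. rewrite Hs, Hc. field. lra. }
  assert (Hr : fr A0 (1 - A0) = sin (PI * A0)).
  { unfold fr. rewrite Hk. replace (1 + 0 ^ 2) with 1 by ring. rewrite sqrt_1.
    unfold fS. rewrite Hs. field. }
  split; [exact Hk|]. split; [|split].
  - unfold fp. rewrite Hr, Hs. field. lra.
  - unfold fq. rewrite Hr, Hs. field. lra.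
  - unfold fphi. rewrite Hk, atan_0. ring.
Qed.

Lemma acos_half : acos (1/2) = PI / 3.
Proof. rewrite <- cos_PI3. apply acos_cos. pose proof PI_RGT_0. lra. Qed.

Lemma sqrt34 : sqrt (1 - (1/2)²) = sqrt 3 / 2.
Proof.
  replace (1 - (1/2)²) with ((sqrt 3 / 2)²).
  apply sqrt_Rsqr. pose proof (sqrt_pos 3). lra.
  unfold Rsqr. replace (sqrt 3 / 2 * (sqrt 3 / 2)) with (sqrt 3 * sqrt 3 / 4) by field.
  rewrite sqrt_sqrt by lra. field.
Qed.

Lemma dacos_half : is_derive acos (1/2) (- 2 / sqrt 3).
Proof.
  assert (H : -1 < 1/2 < 1) by lra.
  pose proof (derive_pt_acos (1/2) H) as E. unfold derive_pt in E.
  destruct (derivable_pt_acos (1/2) H) as [l Hl]. simpl in E.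
  apply is_derive_Reals. rewrite sqrt34 in E.
  replace (-2 / sqrt 3) with l. exact Hl. rewrite E. field.
  pose proof (sqrt_lt_R0 3). lra.
Qed.

Lemma is_derive_val (f : R -> R) (x l l' : R) : is_derive f x l -> l = l' -> is_derive f x l'.
Proof. intros H ->; exact H. Qed.

Definition Lval A0 := (3 / 8) * (1 + sqrt 3 * (cos (PI * A0) / sin (PI * A0))).

Lemma dTh1 A0 B0 : 0 < A0 < 1 -> A0 + B0 = 1 -> is_derive (fun y => Th1 A0 y) B0 (Lval A0).
Proof.
  intros HA HAB. destruct (base A0 B0 HA HAB) as [_ [_ [Hq _]]].
  pose proof (sinpos A0 HA) as s0. pose proof PI_RGT_0. pose proof (sqrt_lt_R0 3 ltac:(lra)).
  unfold Th1.
  eapply is_derive_val.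
  apply (is_derive_scal (fun y => fphi A0 y + acos (fq A0 y))).
  apply (is_derive_plus (fun y => fphi A0 y) (fun y => acos (fq A0 y))).
  apply dphi; auto.
  apply (is_derive_comp acos (fun y => fq A0 y)). rewrite Hq. apply dacos_half.
  apply dq; auto.
  unfold Lval, plus, scal; simpl. unfold mult; simpl.
  field_simplify; try lra.
  replace (36 * PI * cos (PI * A0)) with (12 * PI * cos (PI*A0) * (sqrt 3 * sqrt 3)) by (rewrite sqrt_sqrt by lra; ring).
  field. repeat split; lra.
Qed.

Lemma dTh2 A0 B0 : 0 < A0 < 1 -> A0 + B0 = 1 -> is_derive (fun y => Th2 A0 y) B0 (Lval A0).
Proof.
  intros HA HAB. destruct (base A0 B0 HA HAB) as [_ [Hp _]].
  pose proof (sinpos A0 HA) as s0. pose proof PI_RGT_0. pose proof (sqrt_lt_R0 3 ltac:(lra)).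
  unfold Th2.
  eapply is_derive_val.
  apply (is_derive_scal (fun y => 2 * PI + fphi A0 y - acos (fp A0 y))).
  apply (is_derive_minus (fun y => 2 * PI + fphi A0 y) (fun y => acos (fp A0 y))).
  apply (is_derive_plus (fun y => 2 * PI) (fun y => fphi A0 y)).
  apply is_derive_const.
  apply dphi; auto.
  apply (is_derive_comp acos (fun y => fp A0 y)). rewrite Hp. apply dacos_half.
  apply dp; auto.
  unfold Lval, minus, opp, zero, scal; simpl. unfold plus, mult; simpl.
  field_simplify; try lra.
  replace (36 * PI * cos (PI * A0)) with (12 * PI * cos (PI*A0) * (sqrt 3 * sqrt 3)) by (rewrite sqrt_sqrt by lra; ring).
  field. repeat split; lra.
Qed.

Lemma lim_from_derive (g : R -> R) x l c : is_derive g x l -> g x = c ->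
  lim0 (fun e => (g (x - e) - c) / e) (- l).
Proof.
  intros H Hc eps He. subst c. apply is_derive_Reals in H.
  destruct (H eps He) as [d Hd]. exists d. split. apply cond_pos.
  intros e [He0 Hed].
  assert (Hne : - e <> 0). { intro Z. assert (e = 0) by lra. subst. rewrite Rabs_R0 in He0. lra. }
  assert (Hl : Rabs (- e) < d) by (rewrite Rabs_Ropp; auto).
  specialize (Hd (- e) Hne Hl).
  replace (x + - e) with (x - e) in Hd by ring.
  replace ((g (x - e) - g x) / e - - l) with (- ((g (x - e) - g x) / - e - l)).
  rewrite Rabs_Ropp. exact Hd. field. intro Z; apply Hne; rewrite Z; ring.
Qed.

Lemma Th_bounds A B : 0 < Th1 A B /\ 0 < Th2 A B /\ 2 * (Th1 A B + Th2 A B) / 3 > 1.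
Proof.
  pose proof PI_RGT_0. pose proof (atan_bound (fk A B)).
  pose proof (acos_bound (fp A B)). pose proof (acos_bound (fq A B)).
  assert (Hc : 0 < 3 / (4 * PI)) by (apply Rdiv_lt_0_compat; lra).
  unfold Th1, Th2, fphi in *. set (a := atan (fk A B)) in *.
  set (p := acos (fp A B)) in *. set (q := acos (fq A B)) in *.
  clearbody a p q. split; [|split].
  - apply Rmult_lt_0_compat; lra.
  - apply Rmult_lt_0_compat; lra.
  - replace (2 * (3 / (4 * PI) * (PI - a + q) + 3 / (4 * PI) * (2 * PI + (PI - a) - p)) / 3)
      with (1 + (2 * PI - 2 * a + q - p) / (2 * PI)) by (field; lra).
    assert (0 < (2 * PI - 2 * a + q - p) / (2 * PI)) by (apply Rdiv_lt_0_compat; lra). lra.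
Qed.

Theorem mainTheorem5 (A0 B0 : R) :
  0 < A0 < 1 -> 0 < B0 < 1 -> A0 + B0 = 1 ->
  exists (delta : R) (Theta1 Theta2 : R -> R -> R),
    0 < delta /\
    (forall A B : R, Rabs (A - A0) + Rabs (B - B0) < delta ->
       differentiable2_at Theta1 A B /\ differentiable2_at Theta2 A B) /\
    Theta1 A0 B0 = 1 /\ Theta2 A0 B0 = 2 /\
    (forall A B : R, Rabs (A - A0) + Rabs (B - B0) < delta ->
       Cadd (K (Theta2 A B) A) (K (Theta1 A B) B) = C0 /\
       inK A B (Theta1 A B) (Theta2 A B)) /\
    lim0 (fun e => (Theta1 A0 (B0 - e) - 1) / e)
         (- (3 / 8) * (1 + sqrt 3 * (cos (PI * A0) / sin (PI * A0)))) /\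
    lim0 (fun e => (Theta2 A0 (B0 - e) - 2) / e)
         (- (3 / 8) * (1 + sqrt 3 * (cos (PI * A0) / sin (PI * A0)))).
Proof.
  intros HA HB HAB. pose proof PI_RGT_0.
  destruct (base A0 B0 HA HAB) as [Hk [Hp [Hq Hphi]]].
  destruct (D2_cont fp A0 B0 (D2_fp A0 B0 HA HB) (1/2) ltac:(lra)) as [d1 [Hd1 C1]].
  destruct (D2_cont fq A0 B0 (D2_fq A0 B0 HA HB) (1/2) ltac:(lra)) as [d2 [Hd2 C2]].
  set (delta := Rmin (Rmin (Rmin A0 (1 - A0)) (Rmin B0 (1 - B0))) (Rmin d1 d2)).
  assert (Hdel : 0 < delta).
  { unfold delta. repeat apply Rmin_pos; lra. }
  assert (Dom : forall A B, Rabs (A - A0) + Rabs (B - B0) < delta ->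
    0 < A < 1 /\ 0 < B < 1 /\ 0 < fp A B < 1 /\ 0 < fq A B < 1).
  { intros A B Hab.
    assert (Ha : Rabs (A - A0) < delta) by (pose proof (Rabs_pos (B - B0)); lra).
    assert (Hb : Rabs (B - B0) < delta) by (pose proof (Rabs_pos (A - A0)); lra).
    assert (m1 : delta <= A0) by (unfold delta; repeat (eapply Rle_trans; [apply Rmin_l|]); lra).
    assert (m2 : delta <= 1 - A0) by (unfold delta; eapply Rle_trans; [apply Rmin_l|];
      eapply Rle_trans; [apply Rmin_l|]; apply Rmin_r).
    assert (m3 : delta <= B0) by (unfold delta; eapply Rle_trans; [apply Rmin_l|];
      eapply Rle_trans; [apply Rmin_r|]; apply Rmin_l).
    assert (m4 : delta <= 1 - B0) by (unfold delta; eapply Rle_trans; [apply Rmin_l|];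
      eapply Rle_trans; [apply Rmin_r|]; apply Rmin_r).
    assert (m5 : delta <= d1) by (unfold delta; eapply Rle_trans; [apply Rmin_r|]; apply Rmin_l).
    assert (m6 : delta <= d2) by (unfold delta; eapply Rle_trans; [apply Rmin_r|]; apply Rmin_r).
    specialize (C1 A B ltac:(lra)). specialize (C2 A B ltac:(lra)).
    rewrite Hp in C1. rewrite Hq in C2.
    apply Rabs_def2 in C1. apply Rabs_def2 in C2. apply Rabs_def2 in Ha. apply Rabs_def2 in Hb.
    repeat split; lra. }
  exists delta, Th1, Th2. split; [exact Hdel|]. split; [|split; [|split; [|split; [|split]]]].
  - intros A B Hab. destruct (Dom A B Hab) as [HA' [HB' [Hp' Hq']]].
    split; apply D2_to_diff. apply D2_Th1; auto; lra. apply D2_Th2; auto; lra.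
  - unfold Th1. rewrite Hphi, Hq, acos_half. field. lra.
  - unfold Th2. rewrite Hphi, Hp, acos_half. field. lra.
  - intros A B Hab. destruct (Dom A B Hab) as [HA' [HB' [Hp' Hq']]].
    assert (E : Cadd (K (Th2 A B) A) (K (Th1 A B) B) = C0) by (apply eqn; auto; lra).
    split; [exact E|]. destruct (Th_bounds A B) as [b1 [b2 b3]].
    unfold inK. repeat split; auto; lra.
  - replace (- (3 / 8) * (1 + sqrt 3 * (cos (PI * A0) / sin (PI * A0)))) with (- Lval A0)
      by (unfold Lval; ring).
    apply (lim_from_derive (fun y => Th1 A0 y)). apply dTh1; auto.
    unfold Th1. rewrite Hphi, Hq, acos_half. field. lra.
  - replace (- (3 / 8) * (1 + sqrt 3 * (cos (PI * A0) / sin (PI * A0)))) with (- Lval A0)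
      by (unfold Lval; ring).
    apply (lim_from_derive (fun y => Th2 A0 y)). apply dTh2; auto.
    unfold Th2. rewrite Hphi, Hp, acos_half. field. lra.
Qed.
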